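(* Let $(a_0,a_2)$ be any one of the four pairs $$\Big(1+\tfrac{i}{2}-\tfrac{\sqrt3}{2},\,-i\Big),\ \Big(1+\tfrac{i}{2}+\tfrac{\sqrt3}{2},\,-i\Big),\ \Big(1-\tfrac{i}{2}-\tfrac{\sqrt3}{2},\,i\Big),\ \Big(1-\tfrac{i}{2}+\tfrac{\sqrt3}{2},\,i\Big).$$ Then the second-order recursion $$z_n = \frac{a_2 z_{n-2} + z_{n-1} + a_0}{z_{n-2}}$$ (that is, $z_n = \frac{-2i z_{n-2}+2z_{n-1}+(2\mp\sqrt3+i)}{2z_{n-2}}$ or $z_n = \frac{2i z_{n-2}+2z_{n-1}+(2\mp\sqrt3-i)}{2z_{n-2}}$) is periodic with period $12$: for the sequence defined from indeterminates $z_1,z_2$ one has $z_{13}=z_1$ and $z_{14}=z_2$ in $\mathbb{C}(z_1,z_2)$, hence $z_{n+12}=z_n$ for all $n\ge1$.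
   Context: Let $z_1,z_2$ be independent indeterminates over $\mathbb{C}$, and define $z_n\in\mathbb{C}(z_1,z_2)$ for $n\ge3$ by the given recursion. A second-order recursion is periodic with period $k$ if all iterates are well-defined elements of $\mathbb{C}(z_1,z_2)$ (no denominator identically zero) and $z_{k+1}=z_1$, $z_{k+2}=z_2$; equivalently every complex sequence satisfying the recursion with no vanishing denominator satisfies $z_{n+k}=z_n$ for all $n$. *)

(* Defs.v *)
From HB Require Import structures.
From mathcomp Require Import all_boot all_order all_algebra.
From mathcomp Require Export complex.
From mathcomp Require Import Rstruct.
Set Implicit Arguments. Unset Strict Implicit. Unset Printing Implicit Defensive.
Import GRing.Theory Num.Theory.
Local Open Scope ring_scope.

Definition C : numClosedFieldType := complex Rdefinitions.R.

Definition Cz1z2 : fieldType := {fraction {poly {poly C}}}.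

Definition z1 : Cz1z2 := FracField.tofrac (('X : {poly C})%:P).
Definition z2 : Cz1z2 := FracField.tofrac ('X : {poly {poly C}}).

Definition cst (c : C) : Cz1z2 := FracField.tofrac ((c%:P)%:P).

Definition sqrt3 : C := (real_complex Rdefinitions.R (Num.sqrt (3 : Rdefinitions.R))).
Definition iC : C := 'i.

(* The sequence z_n (n >= 1) of the recursion z_n = (a2 z_{n-2} + z_{n-1} + a0) / z_{n-2},
   from z_1 = z1, z_2 = z2.  Index 0 is an unused dummy (set to 0).
   zseq_pair n = (z_{n+1}, z_{n+2}). *)
Fixpoint zseq_pair (a0 a2 : C) (n : nat) : Cz1z2 * Cz1z2 :=
  match n with
  | 0 => (z1, z2)
  | n'.+1 => let (u, v) := zseq_pair a0 a2 n' in
             (v, (cst a2 * u + v + cst a0) / u)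
  end.

Definition zseq (a0 a2 : C) (n : nat) : Cz1z2 :=
  match n with 0 => 0 | n'.+1 => (zseq_pair a0 a2 n').1 end.

(* periodicity with period k in C(z1,z2): all iterates well defined (the
   denominators z_1, z_2, ... are nonzero) and z_{k+1} = z_1, z_{k+2} = z_2 *)
Definition periodic_with (a0 a2 : C) (k : nat) : Prop :=
  (forall n, (1 <= n)%N -> zseq a0 a2 n != 0) /\
  zseq a0 a2 k.+1 = zseq a0 a2 1 /\ zseq a0 a2 k.+2 = zseq a0 a2 2.

(* Main.v *)
Require Import Defs.
From mathcomp Require Import all_boot all_order all_algebra.
From mathcomp Require Import ring.
Set Implicit Arguments. Unset Strict Implicit. Unset Printing Implicit Defensive.
Import GRing.Theory Num.Theory.
Local Open Scope ring_scope.

Definition term := (int * nat * nat * nat * nat)%type.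
Definition evalP {R : comNzRingType} (l : seq term) (b t x y : R) : R :=
  foldr (fun m acc => let: (c, eb, et, ex, ey) := m in
     c%:~R * b ^+ eb * t ^+ et * x ^+ ex * y ^+ ey + acc) 0 l.

Lemma evalP_morph (R S : comNzRingType) (f : {rmorphism R -> S}) l b t x y :
  f (evalP l b t x y) = evalP l (f b) (f t) (f x) (f y).
Proof.
elim: l => [|[[[[c eb] et] ex] ey] l IH] /=; first exact: rmorph0.
by rewrite rmorphD IH !rmorphM !rmorphXn rmorph_int.
Qed.

Lemma nzr (R : numFieldType) (r : nat) (M w : R) : (0 < r)%N -> w * M = r%:R -> w != 0.
Proof.
move=> r0 h; apply/eqP=> w0; move: h; rewrite w0 mul0r => /eqP.
by rewrite eq_sym pnatr_eq0; case: r r0.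
Qed.

Lemma nz_gen (l : seq term) (x0 y0 b t : C) :
  evalP l b t x0 y0 != 0 -> evalP l (cst b) (cst t) z1 z2 != 0.
Proof.
move=> h.
have e : evalP l (cst b) (cst t) z1 z2 =
   FracField.tofrac (evalP l ((b%:P)%:P) ((t%:P)%:P) (('X : {poly C})%:P) 'X)
  by rewrite evalP_morph.
rewrite e tofrac_eq0; apply: contra h => /eqP h0.
have := congr1 (horner_eval x0 \o horner_eval (y0%:P)) h0 => /=.
rewrite !evalP_morph !rmorph0 /= /horner_eval /= !hornerC !hornerX !hornerC.
by move=> ->.
Qed.
Definition P1 : seq term :=
  [:: (Posz 1, 0, 0, 1, 0)].

Lemma P1_nz (R : numFieldType) (b t : R) (hb : b * b = -1) (ht : t * t = 3) :
  evalP P1 b t (- 1%:R) (- 4%:R) != 0.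
Proof. apply: (nzr (r := 1) (M := - (1%:R))) => //; rewrite /evalP /P1 /=; ring: hb ht. Qed.

Lemma P1_nzF (b t : C) (hb : b * b = -1) (ht : t * t = 3) :
  evalP P1 (cst b) (cst t) z1 z2 != 0.
Proof. exact: (nz_gen (P1_nz hb ht)). Qed.

Definition Q1 : seq term :=
  [:: (Posz 1, 0, 0, 0, 0)].

Lemma Q1_nz (R : numFieldType) (b t : R) (hb : b * b = -1) (ht : t * t = 3) :
  evalP Q1 b t (- 4%:R) (- 4%:R) != 0.
Proof. apply: (nzr (r := 1) (M := 1%:R)) => //; rewrite /evalP /Q1 /=; ring: hb ht. Qed.

Lemma Q1_nzF (b t : C) (hb : b * b = -1) (ht : t * t = 3) :
  evalP Q1 (cst b) (cst t) z1 z2 != 0.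
Proof. exact: (nz_gen (Q1_nz hb ht)). Qed.

Definition P2 : seq term :=
  [:: (Posz 1, 0, 0, 0, 1)].

Lemma P2_nz (R : numFieldType) (b t : R) (hb : b * b = -1) (ht : t * t = 3) :
  evalP P2 b t (- 4%:R) (- 1%:R) != 0.
Proof. apply: (nzr (r := 1) (M := - (1%:R))) => //; rewrite /evalP /P2 /=; ring: hb ht. Qed.

Lemma P2_nzF (b t : C) (hb : b * b = -1) (ht : t * t = 3) :
  evalP P2 (cst b) (cst t) z1 z2 != 0.
Proof. exact: (nz_gen (P2_nz hb ht)). Qed.

Definition Q2 : seq term :=
  [:: (Posz 1, 0, 0, 0, 0)].

Lemma Q2_nz (R : numFieldType) (b t : R) (hb : b * b = -1) (ht : t * t = 3) :
  evalP Q2 b t (- 4%:R) (- 4%:R) != 0.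
Proof. apply: (nzr (r := 1) (M := 1%:R)) => //; rewrite /evalP /Q2 /=; ring: hb ht. Qed.

Lemma Q2_nzF (b t : C) (hb : b * b = -1) (ht : t * t = 3) :
  evalP Q2 (cst b) (cst t) z1 z2 != 0.
Proof. exact: (nz_gen (Q2_nz hb ht)). Qed.

Definition P3 : seq term :=
  [:: (Posz 2, 0, 0, 0, 0); (Negz 0, 1, 0, 0, 0); (Posz 1, 0, 1, 0, 0); (Posz 2, 0, 0, 0, 1); (Posz 2, 1, 0, 1, 0)].

Lemma P3_nz (R : numFieldType) (b t : R) (hb : b * b = -1) (ht : t * t = 3) :
  evalP P3 b t (0%:R) (- 2%:R) != 0.
Proof. apply: (nzr (r := 16) (M := - (4%:R) + 8%:R * b + 4%:R * b * t)) => //; rewrite /evalP /P3 /=; ring: hb ht. Qed.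

Lemma P3_nzF (b t : C) (hb : b * b = -1) (ht : t * t = 3) :
  evalP P3 (cst b) (cst t) z1 z2 != 0.
Proof. exact: (nz_gen (P3_nz hb ht)). Qed.

Definition Q3 : seq term :=
  [:: (Posz 2, 0, 0, 1, 0)].

Lemma Q3_nz (R : numFieldType) (b t : R) (hb : b * b = -1) (ht : t * t = 3) :
  evalP Q3 b t (- 1%:R) (- 4%:R) != 0.
Proof. apply: (nzr (r := 16) (M := - (8%:R))) => //; rewrite /evalP /Q3 /=; ring: hb ht. Qed.

Lemma Q3_nzF (b t : C) (hb : b * b = -1) (ht : t * t = 3) :
  evalP Q3 (cst b) (cst t) z1 z2 != 0.
Proof. exact: (nz_gen (Q3_nz hb ht)). Qed.

Definition P4 : seq term :=
  [:: (Posz 2, 0, 0, 0, 0); (Negz 0, 1, 0, 0, 0); (Posz 1, 0, 1, 0, 0); (Posz 2, 0, 0, 0, 1); (Posz 2, 0, 0, 1, 0); (Posz 1, 1, 0, 1, 0); (Posz 1, 0, 1, 1, 0); (Posz 2, 1, 0, 1, 1)].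

Lemma P4_nz (R : numFieldType) (b t : R) (hb : b * b = -1) (ht : t * t = 3) :
  evalP P4 b t (- 1%:R) (- 1%:R) != 0.
Proof. apply: (nzr (r := 16) (M := - (8%:R))) => //; rewrite /evalP /P4 /=; ring: hb ht. Qed.

Lemma P4_nzF (b t : C) (hb : b * b = -1) (ht : t * t = 3) :
  evalP P4 (cst b) (cst t) z1 z2 != 0.
Proof. exact: (nz_gen (P4_nz hb ht)). Qed.

Definition Q4 : seq term :=
  [:: (Posz 2, 0, 0, 1, 1)].

Lemma Q4_nz (R : numFieldType) (b t : R) (hb : b * b = -1) (ht : t * t = 3) :
  evalP Q4 b t (- 1%:R) (- 1%:R) != 0.
Proof. apply: (nzr (r := 16) (M := 8%:R)) => //; rewrite /evalP /Q4 /=; ring: hb ht. Qed.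

Lemma Q4_nzF (b t : C) (hb : b * b = -1) (ht : t * t = 3) :
  evalP Q4 (cst b) (cst t) z1 z2 != 0.
Proof. exact: (nz_gen (Q4_nz hb ht)). Qed.

Definition P5 : seq term :=
  [:: (Posz 2, 0, 0, 0, 0); (Negz 0, 1, 0, 0, 0); (Posz 1, 0, 1, 0, 0); (Posz 3, 0, 0, 0, 1); (Posz 2, 1, 0, 0, 1); (Posz 1, 1, 1, 0, 1); (Posz 2, 1, 0, 0, 2); (Posz 2, 0, 0, 1, 0); (Posz 1, 1, 0, 1, 0); (Posz 1, 0, 1, 1, 0); (Posz 1, 1, 0, 1, 1); (Posz 1, 0, 1, 1, 1)].

Lemma P5_nz (R : numFieldType) (b t : R) (hb : b * b = -1) (ht : t * t = 3) :
  evalP P5 b t (- 1%:R) (0%:R) != 0.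
Proof. apply: (nzr (r := 16) (M := 8%:R * b)) => //; rewrite /evalP /P5 /=; ring: hb ht. Qed.

Lemma P5_nzF (b t : C) (hb : b * b = -1) (ht : t * t = 3) :
  evalP P5 (cst b) (cst t) z1 z2 != 0.
Proof. exact: (nz_gen (P5_nz hb ht)). Qed.

Definition Q5 : seq term :=
  [:: (Posz 2, 0, 0, 0, 1); (Negz 0, 1, 0, 0, 1); (Posz 1, 0, 1, 0, 1); (Posz 2, 0, 0, 0, 2); (Posz 2, 1, 0, 1, 1)].

Lemma Q5_nz (R : numFieldType) (b t : R) (hb : b * b = -1) (ht : t * t = 3) :
  evalP Q5 b t (0%:R) (- 1%:R) != 0.
Proof. apply: (nzr (r := 16) (M := - (4%:R * b) + - (4%:R * t))) => //; rewrite /evalP /Q5 /=; ring: hb ht. Qed.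

Lemma Q5_nzF (b t : C) (hb : b * b = -1) (ht : t * t = 3) :
  evalP Q5 (cst b) (cst t) z1 z2 != 0.
Proof. exact: (nz_gen (Q5_nz hb ht)). Qed.

Definition P6 : seq term :=
  [:: (Posz 2, 0, 0, 0, 0); (Posz 3, 1, 0, 0, 0); (Posz 1, 0, 1, 0, 0); (Posz 2, 1, 1, 0, 0); (Posz 2, 0, 0, 0, 1); (Posz 4, 1, 0, 0, 1); (Posz 2, 1, 1, 0, 1); (Posz 2, 1, 0, 0, 2); (Posz 4, 1, 0, 1, 0); (Posz 2, 1, 1, 1, 0); (Posz 1, 0, 0, 1, 1); (Posz 3, 1, 0, 1, 1); (Posz 1, 0, 1, 1, 1); (Posz 1, 1, 1, 1, 1); (Posz 1, 1, 0, 1, 2); (Posz 1, 0, 1, 1, 2); (Posz 1, 0, 0, 2, 1); (Posz 1, 1, 0, 2, 1); (Posz 1, 0, 1, 2, 1); (Posz 1, 1, 1, 2, 1)].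

Lemma P6_nz (R : numFieldType) (b t : R) (hb : b * b = -1) (ht : t * t = 3) :
  evalP P6 b t (- 1%:R) (0%:R) != 0.
Proof. apply: (nzr (r := 16) (M := 4%:R + 8%:R * b + - (4%:R * b * t))) => //; rewrite /evalP /P6 /=; ring: hb ht. Qed.

Lemma P6_nzF (b t : C) (hb : b * b = -1) (ht : t * t = 3) :
  evalP P6 (cst b) (cst t) z1 z2 != 0.
Proof. exact: (nz_gen (P6_nz hb ht)). Qed.

Definition Q6 : seq term :=
  [:: (Posz 3, 0, 0, 0, 0); (Negz 1, 1, 0, 0, 0); (Posz 2, 0, 1, 0, 0); (Negz 0, 1, 1, 0, 0); (Posz 4, 0, 0, 0, 1); (Negz 1, 1, 0, 0, 1); (Posz 2, 0, 1, 0, 1); (Posz 2, 0, 0, 0, 2); (Posz 5, 0, 0, 1, 0); (Posz 2, 1, 0, 1, 0); (Posz 2, 0, 1, 1, 0); (Posz 1, 1, 1, 1, 0); (Posz 3, 0, 0, 1, 1); (Posz 5, 1, 0, 1, 1); (Posz 1, 0, 1, 1, 1); (Posz 1, 1, 1, 1, 1); (Posz 2, 1, 0, 1, 2); (Negz 0, 0, 0, 2, 0); (Posz 2, 1, 0, 2, 0); (Posz 1, 1, 1, 2, 0); (Negz 1, 0, 0, 2, 1)].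

Lemma Q6_nz (R : numFieldType) (b t : R) (hb : b * b = -1) (ht : t * t = 3) :
  evalP Q6 b t (0%:R) (- 2%:R) != 0.
Proof. apply: (nzr (r := 16) (M := - (12%:R) + - (8%:R * b) + - (8%:R * t) + - (4%:R * b * t))) => //; rewrite /evalP /Q6 /=; ring: hb ht. Qed.

Lemma Q6_nzF (b t : C) (hb : b * b = -1) (ht : t * t = 3) :
  evalP Q6 (cst b) (cst t) z1 z2 != 0.
Proof. exact: (nz_gen (Q6_nz hb ht)). Qed.

Definition P7 : seq term :=
  [:: (Posz 1, 0, 0, 0, 0); (Posz 2, 1, 0, 0, 0); (Posz 1, 1, 1, 0, 0); (Posz 2, 0, 0, 0, 1); (Posz 3, 1, 0, 0, 1); (Posz 1, 0, 1, 0, 1); (Posz 1, 1, 0, 0, 2); (Posz 1, 0, 1, 0, 2); (Negz 1, 0, 0, 1, 0); (Posz 4, 1, 0, 1, 0); (Posz 2, 1, 1, 1, 0); (Negz 0, 0, 0, 1, 1); (Posz 3, 1, 0, 1, 1); (Posz 1, 0, 1, 1, 1); (Posz 3, 1, 1, 1, 1); (Posz 1, 0, 0, 1, 2); (Posz 1, 1, 0, 1, 2); (Posz 1, 0, 1, 1, 2); (Posz 1, 1, 1, 1, 2); (Negz 0, 0, 0, 2, 0); (Posz 1, 1, 0, 2, 0); (Negz 0, 0, 1, 2, 0); (Posz 1, 1, 1, 2, 0); (Negz 0, 0, 0, 2, 1); (Posz 1, 1, 0, 2, 1); (Negz 0, 0, 1, 2, 1); (Posz 1, 1, 1, 2, 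1)].

Lemma P7_nz (R : numFieldType) (b t : R) (hb : b * b = -1) (ht : t * t = 3) :
  evalP P7 b t (- 1%:R) (- 1%:R) != 0.
Proof. apply: (nzr (r := 16) (M := - (8%:R) + 4%:R * b + - (4%:R * t))) => //; rewrite /evalP /P7 /=; ring: hb ht. Qed.

Lemma P7_nzF (b t : C) (hb : b * b = -1) (ht : t * t = 3) :
  evalP P7 (cst b) (cst t) z1 z2 != 0.
Proof. exact: (nz_gen (P7_nz hb ht)). Qed.

Definition Q7 : seq term :=
  [:: (Posz 2, 0, 0, 0, 0); (Negz 0, 1, 0, 0, 0); (Posz 1, 0, 1, 0, 0); (Posz 3, 0, 0, 0, 1); (Posz 2, 1, 0, 0, 1); (Posz 1, 1, 1, 0, 1); (Posz 2, 1, 0, 0, 2); (Posz 4, 0, 0, 1, 0); (Posz 2, 1, 0, 1, 0); (Posz 2, 0, 1, 1, 0); (Negz 0, 0, 0, 1, 1); (Posz 5, 1, 0, 1, 1); (Posz 1, 0, 1, 1, 1); (Posz 1, 1, 1, 1, 1); (Negz 1, 0, 0, 1, 2); (Posz 1, 0, 0, 2, 0); (Posz 1, 1, 0, 2, 0); (Posz 1, 0, 1, 2, 0); (Posz 1, 1, 1, 2, 0); (Negz 0, 0, 0, 2, 1); (Posz 1, 1, 1, 2, 1)].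

Lemma Q7_nz (R : numFieldType) (b t : R) (hb : b * b = -1) (ht : t * t = 3) :
  evalP Q7 b t (- 1%:R) (0%:R) != 0.
Proof. apply: (nzr (r := 16) (M := - (8%:R) + 4%:R * b + - (4%:R * t))) => //; rewrite /evalP /Q7 /=; ring: hb ht. Qed.

Lemma Q7_nzF (b t : C) (hb : b * b = -1) (ht : t * t = 3) :
  evalP Q7 (cst b) (cst t) z1 z2 != 0.
Proof. exact: (nz_gen (Q7_nz hb ht)). Qed.

Definition P8 : seq term :=
  [:: (Negz 1, 0, 0, 0, 0); (Posz 3, 1, 0, 0, 0); (Negz 0, 0, 1, 0, 0); (Posz 2, 1, 1, 0, 0); (Negz 5, 0, 0, 0, 1); (Posz 6, 1, 0, 0, 1); (Negz 3, 0, 1, 0, 1); (Posz 4, 1, 1, 0, 1); (Negz 2, 0, 0, 0, 2); (Posz 2, 1, 0, 0, 2); (Negz 1, 0, 1, 0, 2); (Posz 1, 1, 1, 0, 2); (Negz 6, 0, 0, 1, 0); (Posz 1, 1, 0, 1, 0); (Negz 4, 0, 1, 1, 0); (Posz 1, 1, 1, 1, 0); (Negz 13, 0, 0, 1, 1); (Negz 3, 1, 0, 1, 1); (Negz 9, 0, 1, 1, 1); (Negz 3, 1, 1, 1, 1); (Negz 3, 0, 0, 1, 2); (Negz 1, 1, 0, 1, 2); (Negz 1, 0, 1, 1, 2); (Negz 1, 1, 1, 1, 2); (Negz 4, 0, 0, 2, 0); (Negz 2, 1, 0, 2, 0); (Negz 2, 0, 1, 2, 0); (Negz 2, 1, 1,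 2, 0); (Negz 4, 0, 0, 2, 1); (Negz 8, 1, 0, 2, 1); (Negz 0, 0, 1, 2, 1); (Negz 6, 1, 1, 2, 1); (Negz 0, 0, 0, 2, 2); (Negz 1, 1, 0, 2, 2); (Negz 0, 1, 1, 2, 2); (Negz 0, 0, 0, 3, 0); (Negz 1, 1, 0, 3, 0); (Negz 0, 1, 1, 3, 0); (Posz 1, 0, 0, 3, 1); (Negz 2, 1, 0, 3, 1); (Posz 1, 0, 1, 3, 1); (Negz 0, 1, 1, 3, 1)].

Lemma P8_nz (R : numFieldType) (b t : R) (hb : b * b = -1) (ht : t * t = 3) :
  evalP P8 b t (0%:R) (- 1%:R) != 0.
Proof. apply: (nzr (r := 16) (M := - (4%:R) + - (4%:R * b) + 4%:R * t + 4%:R * b * t)) => //; rewrite /evalP /P8 /=; ring: hb ht. Qed.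

Lemma P8_nzF (b t : C) (hb : b * b = -1) (ht : t * t = 3) :
  evalP P8 (cst b) (cst t) z1 z2 != 0.
Proof. exact: (nz_gen (P8_nz hb ht)). Qed.

Definition Q8 : seq term :=
  [:: (Negz 3, 0, 0, 0, 0); (Negz 1, 0, 1, 0, 0); (Negz 1, 0, 0, 0, 1); (Negz 4, 1, 0, 0, 1); (Negz 0, 0, 1, 0, 1); (Negz 1, 1, 1, 0, 1); (Posz 1, 0, 0, 0, 2); (Negz 1, 1, 0, 0, 2); (Negz 0, 1, 1, 0, 2); (Negz 4, 0, 0, 1, 0); (Negz 2, 1, 0, 1, 0); (Negz 2, 0, 1, 1, 0); (Negz 0, 1, 1, 1, 0); (Negz 0, 0, 0, 1, 1); (Negz 2, 1, 0, 1, 1); (Negz 2, 0, 1, 1, 1); (Negz 0, 1, 1, 1, 1); (Negz 0, 1, 0, 1, 2); (Negz 0, 0, 1, 1, 2); (Negz 1, 1, 1, 1, 2); (Negz 0, 0, 0, 2, 0); (Negz 0, 1, 0, 2, 0); (Negz 0, 0, 1, 2, 0); (Negz 0, 1, 1, 2, 0); (Negz 2, 0, 0, 2, 1); (Posz 2, 1, 0, 2, 1); (Negz 1, 0, 1, 2, 1); (Negz 0, 1, 1, 2, 1); (Negz 0, 0, 0, 2, 2); (Negz 0, 1, 1, 2, 2); (Negz 1, 0, 0, 3, 1)].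

Lemma Q8_nz (R : numFieldType) (b t : R) (hb : b * b = -1) (ht : t * t = 3) :
  evalP Q8 b t (- 1%:R) (0%:R) != 0.
Proof. apply: (nzr (r := 16) (M := - (8%:R * b))) => //; rewrite /evalP /Q8 /=; ring: hb ht. Qed.

Lemma Q8_nzF (b t : C) (hb : b * b = -1) (ht : t * t = 3) :
  evalP Q8 (cst b) (cst t) z1 z2 != 0.
Proof. exact: (nz_gen (Q8_nz hb ht)). Qed.

Definition P9 : seq term :=
  [:: (Negz 2, 0, 0, 0, 0); (Posz 2, 1, 0, 0, 0); (Negz 1, 0, 1, 0, 0); (Posz 1, 1, 1, 0, 0); (Negz 3, 0, 0, 0, 1); (Negz 1, 1, 0, 0, 1); (Negz 1, 0, 1, 0, 1); (Negz 1, 1, 1, 0, 1); (Negz 0, 0, 0, 0, 2); (Negz 1, 1, 0, 0, 2); (Negz 0, 1, 1, 0, 2); (Negz 4, 0, 0, 1, 0); (Negz 0, 1, 0, 1, 0); (Negz 2, 0, 1, 1, 0); (Negz 0, 1, 1, 1, 0); (Negz 1, 0, 0, 1, 1); (Negz 5, 1, 0, 1, 1); (Negz 3, 1, 1, 1, 1); (Posz 1, 0, 0, 1, 2); (Negz 2, 1, 0, 1, 2); (Posz 1, 0, 1, 1, 2); (Negz 0, 1, 1, 1, 2); (Negz 0, 0, 0, 2, 0); (Negz 1, 1, 0, 2, 0); (Negz 0, 1, 1, 2, 0); (Posz 2, 0, 0, 2, 1); (Negz 0, 1, 0, 2, 1); (Posz 1, 0, 1, 2, 1)].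

Lemma P9_nz (R : numFieldType) (b t : R) (hb : b * b = -1) (ht : t * t = 3) :
  evalP P9 b t (- 1%:R) (0%:R) != 0.
Proof. apply: (nzr (r := 16) (M := - (4%:R) + 4%:R * b + 4%:R * t + - (4%:R * b * t))) => //; rewrite /evalP /P9 /=; ring: hb ht. Qed.

Lemma P9_nzF (b t : C) (hb : b * b = -1) (ht : t * t = 3) :
  evalP P9 (cst b) (cst t) z1 z2 != 0.
Proof. exact: (nz_gen (P9_nz hb ht)). Qed.

Definition Q9 : seq term :=
  [:: (Posz 1, 0, 0, 0, 0); (Negz 1, 1, 0, 0, 0); (Negz 0, 1, 1, 0, 0); (Negz 0, 1, 0, 0, 1); (Negz 0, 0, 1, 0, 1); (Negz 1, 1, 1, 0, 1); (Negz 0, 0, 0, 0, 2); (Negz 0, 1, 1, 0, 2); (Posz 1, 0, 0, 1, 0); (Negz 0, 1, 0, 1, 0); (Posz 1, 0, 1, 1, 0); (Negz 0, 1, 1, 1, 0); (Negz 0, 0, 0, 1, 1); (Negz 0, 1, 0, 1, 1); (Posz 1, 0, 1, 1, 1); (Negz 0, 1, 1, 1, 1); (Negz 1, 0, 0, 1, 2); (Negz 1, 1, 0, 2, 1)].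

Lemma Q9_nz (R : numFieldType) (b t : R) (hb : b * b = -1) (ht : t * t = 3) :
  evalP Q9 b t (- 1%:R) (- 1%:R) != 0.
Proof. apply: (nzr (r := 16) (M := - (4%:R * b) + 4%:R * t)) => //; rewrite /evalP /Q9 /=; ring: hb ht. Qed.

Lemma Q9_nzF (b t : C) (hb : b * b = -1) (ht : t * t = 3) :
  evalP Q9 (cst b) (cst t) z1 z2 != 0.
Proof. exact: (nz_gen (Q9_nz hb ht)). Qed.

Definition P10 : seq term :=
  [:: (Negz 0, 0, 0, 0, 0); (Negz 1, 1, 0, 0, 0); (Negz 0, 1, 1, 0, 0); (Posz 1, 0, 0, 0, 1); (Negz 2, 1, 0, 0, 1); (Posz 1, 0, 1, 0, 1); (Negz 0, 1, 1, 0, 1); (Posz 1, 0, 0, 1, 0); (Negz 1, 1, 0, 1, 0); (Negz 0, 1, 1, 1, 0); (Posz 2, 0, 0, 1, 1); (Negz 0, 1, 0, 1, 1); (Posz 1, 0, 1, 1, 1)].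

Lemma P10_nz (R : numFieldType) (b t : R) (hb : b * b = -1) (ht : t * t = 3) :
  evalP P10 b t (- 1%:R) (- 2%:R) != 0.
Proof. apply: (nzr (r := 16) (M := - (16%:R * b) + 8%:R * b * t)) => //; rewrite /evalP /P10 /=; ring: hb ht. Qed.

Lemma P10_nzF (b t : C) (hb : b * b = -1) (ht : t * t = 3) :
  evalP P10 (cst b) (cst t) z1 z2 != 0.
Proof. exact: (nz_gen (P10_nz hb ht)). Qed.

Definition Q10 : seq term :=
  [:: (Negz 0, 0, 0, 0, 0); (Negz 0, 1, 1, 0, 0); (Negz 1, 0, 0, 0, 1); (Negz 2, 1, 0, 1, 0); (Posz 1, 0, 1, 1, 0); (Negz 1, 1, 0, 1, 1); (Posz 2, 0, 0, 2, 0)].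

Lemma Q10_nz (R : numFieldType) (b t : R) (hb : b * b = -1) (ht : t * t = 3) :
  evalP Q10 b t (0%:R) (- 1%:R) != 0.
Proof. apply: (nzr (r := 16) (M := 4%:R + 4%:R * b * t)) => //; rewrite /evalP /Q10 /=; ring: hb ht. Qed.

Lemma Q10_nzF (b t : C) (hb : b * b = -1) (ht : t * t = 3) :
  evalP Q10 (cst b) (cst t) z1 z2 != 0.
Proof. exact: (nz_gen (Q10_nz hb ht)). Qed.

Definition P11 : seq term :=
  [:: (Posz 1, 0, 0, 0, 0); (Negz 2, 1, 0, 0, 0); (Posz 1, 0, 1, 0, 0); (Negz 0, 1, 1, 0, 0); (Posz 2, 0, 0, 0, 1); (Negz 0, 1, 0, 0, 1); (Posz 1, 0, 1, 0, 1); (Posz 2, 0, 0, 1, 0)].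

Lemma P11_nz (R : numFieldType) (b t : R) (hb : b * b = -1) (ht : t * t = 3) :
  evalP P11 b t (0%:R) (- 1%:R) != 0.
Proof. apply: (nzr (r := 16) (M := - (8%:R) + 4%:R * b + 4%:R * t)) => //; rewrite /evalP /P11 /=; ring: hb ht. Qed.

Lemma P11_nzF (b t : C) (hb : b * b = -1) (ht : t * t = 3) :
  evalP P11 (cst b) (cst t) z1 z2 != 0.
Proof. exact: (nz_gen (P11_nz hb ht)). Qed.

Definition Q11 : seq term :=
  [:: (Negz 1, 0, 0, 0, 0); (Negz 1, 1, 0, 0, 1); (Negz 1, 1, 0, 1, 0); (Posz 2, 0, 0, 1, 1)].

Lemma Q11_nz (R : numFieldType) (b t : R) (hb : b * b = -1) (ht : t * t = 3) :
  evalP Q11 b t (0%:R) (0%:R) != 0.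
Proof. apply: (nzr (r := 16) (M := - (8%:R))) => //; rewrite /evalP /Q11 /=; ring: hb ht. Qed.

Lemma Q11_nzF (b t : C) (hb : b * b = -1) (ht : t * t = 3) :
  evalP Q11 (cst b) (cst t) z1 z2 != 0.
Proof. exact: (nz_gen (Q11_nz hb ht)). Qed.

Definition P12 : seq term :=
  [:: (Posz 2, 0, 0, 0, 0); (Negz 0, 1, 0, 0, 0); (Posz 1, 0, 1, 0, 0); (Posz 2, 0, 0, 1, 0)].

Lemma P12_nz (R : numFieldType) (b t : R) (hb : b * b = -1) (ht : t * t = 3) :
  evalP P12 b t (- 2%:R) (- 4%:R) != 0.
Proof. apply: (nzr (r := 16) (M := - (4%:R) + 8%:R * b + 4%:R * b * t)) => //; rewrite /evalP /P12 /=; ring: hb ht. Qed.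

Lemma P12_nzF (b t : C) (hb : b * b = -1) (ht : t * t = 3) :
  evalP P12 (cst b) (cst t) z1 z2 != 0.
Proof. exact: (nz_gen (P12_nz hb ht)). Qed.

Definition Q12 : seq term :=
  [:: (Negz 1, 1, 0, 0, 0); (Posz 2, 0, 0, 0, 1)].

Lemma Q12_nz (R : numFieldType) (b t : R) (hb : b * b = -1) (ht : t * t = 3) :
  evalP Q12 b t (- 4%:R) (0%:R) != 0.
Proof. apply: (nzr (r := 16) (M := 8%:R * b)) => //; rewrite /evalP /Q12 /=; ring: hb ht. Qed.

Lemma Q12_nzF (b t : C) (hb : b * b = -1) (ht : t * t = 3) :
  evalP Q12 (cst b) (cst t) z1 z2 != 0.
Proof. exact: (nz_gen (Q12_nz hb ht)). Qed.

Definition P13 : seq term :=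
  [:: (Posz 1, 0, 0, 1, 0)].

Lemma P13_nz (R : numFieldType) (b t : R) (hb : b * b = -1) (ht : t * t = 3) :
  evalP P13 b t (- 1%:R) (- 4%:R) != 0.
Proof. apply: (nzr (r := 1) (M := - (1%:R))) => //; rewrite /evalP /P13 /=; ring: hb ht. Qed.

Lemma P13_nzF (b t : C) (hb : b * b = -1) (ht : t * t = 3) :
  evalP P13 (cst b) (cst t) z1 z2 != 0.
Proof. exact: (nz_gen (P13_nz hb ht)). Qed.

Definition Q13 : seq term :=
  [:: (Posz 1, 0, 0, 0, 0)].

Lemma Q13_nz (R : numFieldType) (b t : R) (hb : b * b = -1) (ht : t * t = 3) :
  evalP Q13 b t (- 4%:R) (- 4%:R) != 0.
Proof. apply: (nzr (r := 1) (M := 1%:R)) => //; rewrite /evalP /Q13 /=; ring: hb ht. Qed.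

Lemma Q13_nzF (b t : C) (hb : b * b = -1) (ht : t * t = 3) :
  evalP Q13 (cst b) (cst t) z1 z2 != 0.
Proof. exact: (nz_gen (Q13_nz hb ht)). Qed.

Definition P14 : seq term :=
  [:: (Posz 1, 0, 0, 0, 1)].

Lemma P14_nz (R : numFieldType) (b t : R) (hb : b * b = -1) (ht : t * t = 3) :
  evalP P14 b t (- 4%:R) (- 1%:R) != 0.
Proof. apply: (nzr (r := 1) (M := - (1%:R))) => //; rewrite /evalP /P14 /=; ring: hb ht. Qed.

Lemma P14_nzF (b t : C) (hb : b * b = -1) (ht : t * t = 3) :
  evalP P14 (cst b) (cst t) z1 z2 != 0.
Proof. exact: (nz_gen (P14_nz hb ht)). Qed.

Definition Q14 : seq term :=
  [:: (Posz 1, 0, 0, 0, 0)].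

Lemma Q14_nz (R : numFieldType) (b t : R) (hb : b * b = -1) (ht : t * t = 3) :
  evalP Q14 b t (- 4%:R) (- 4%:R) != 0.
Proof. apply: (nzr (r := 1) (M := 1%:R)) => //; rewrite /evalP /Q14 /=; ring: hb ht. Qed.

Lemma Q14_nzF (b t : C) (hb : b * b = -1) (ht : t * t = 3) :
  evalP Q14 (cst b) (cst t) z1 z2 != 0.
Proof. exact: (nz_gen (Q14_nz hb ht)). Qed.

Lemma id3 (R : comNzRingType) (b t x y : R) (hb : b * b = -1) (ht : t * t = 3) :
  2 * evalP P3 b t x y * evalP Q2 b t x y * evalP P1 b t x y = evalP Q3 b t x y * (2 * b * evalP P1 b t x y * evalP Q2 b t x y + 2 * evalP P2 b t x y * evalP Q1 b t x y + (2 - b + t) * evalP Q1 b t x y * evalP Q2 b t x y).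
Proof. rewrite /evalP /P3 /Q3 /P2 /Q2 /P1 /Q1 /=; ring: hb ht. Qed.

Lemma id4 (R : comNzRingType) (b t x y : R) (hb : b * b = -1) (ht : t * t = 3) :
  2 * evalP P4 b t x y * evalP Q3 b t x y * evalP P2 b t x y = evalP Q4 b t x y * (2 * b * evalP P2 b t x y * evalP Q3 b t x y + 2 * evalP P3 b t x y * evalP Q2 b t x y + (2 - b + t) * evalP Q2 b t x y * evalP Q3 b t x y).
Proof. rewrite /evalP /P4 /Q4 /P3 /Q3 /P2 /Q2 /=; ring: hb ht. Qed.

Lemma id5 (R : comNzRingType) (b t x y : R) (hb : b * b = -1) (ht : t * t = 3) :
  2 * evalP P5 b t x y * evalP Q4 b t x y * evalP P3 b t x y = evalP Q5 b t x y * (2 * b * evalP P3 b t x y * evalP Q4 b t x y + 2 * evalP P4 b t x y * evalP Q3 b t x y + (2 - b + t) * evalP Q3 b t x y * evalP Q4 b t x y).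
Proof. rewrite /evalP /P5 /Q5 /P4 /Q4 /P3 /Q3 /=; ring: hb ht. Qed.

Lemma id6 (R : comNzRingType) (b t x y : R) (hb : b * b = -1) (ht : t * t = 3) :
  2 * evalP P6 b t x y * evalP Q5 b t x y * evalP P4 b t x y = evalP Q6 b t x y * (2 * b * evalP P4 b t x y * evalP Q5 b t x y + 2 * evalP P5 b t x y * evalP Q4 b t x y + (2 - b + t) * evalP Q4 b t x y * evalP Q5 b t x y).
Proof. rewrite /evalP /P6 /Q6 /P5 /Q5 /P4 /Q4 /=; ring: hb ht. Qed.

Lemma id7 (R : comNzRingType) (b t x y : R) (hb : b * b = -1) (ht : t * t = 3) :
  2 * evalP P7 b t x y * evalP Q6 b t x y * evalP P5 b t x y = evalP Q7 b t x y * (2 * b * evalP P5 b t x y * evalP Q6 b t x y + 2 * evalP P6 b t x y * evalP Q5 b t x y + (2 - b + t) * evalP Q5 b t x y * evalP Q6 b t x y).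
Proof. rewrite /evalP /P7 /Q7 /P6 /Q6 /P5 /Q5 /=; ring: hb ht. Qed.

Lemma id8 (R : comNzRingType) (b t x y : R) (hb : b * b = -1) (ht : t * t = 3) :
  2 * evalP P8 b t x y * evalP Q7 b t x y * evalP P6 b t x y = evalP Q8 b t x y * (2 * b * evalP P6 b t x y * evalP Q7 b t x y + 2 * evalP P7 b t x y * evalP Q6 b t x y + (2 - b + t) * evalP Q6 b t x y * evalP Q7 b t x y).
Proof. rewrite /evalP /P8 /Q8 /P7 /Q7 /P6 /Q6 /=; ring: hb ht. Qed.

Lemma id9 (R : comNzRingType) (b t x y : R) (hb : b * b = -1) (ht : t * t = 3) :
  2 * evalP P9 b t x y * evalP Q8 b t x y * evalP P7 b t x y = evalP Q9 b t x y * (2 * b * evalP P7 b t x y * evalP Q8 b t x y + 2 * evalP P8 b t x y * evalP Q7 b t x y + (2 - b + t) * evalP Q7 b t x y * evalP Q8 b t x y).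
Proof. rewrite /evalP /P9 /Q9 /P8 /Q8 /P7 /Q7 /=; ring: hb ht. Qed.

Lemma id10 (R : comNzRingType) (b t x y : R) (hb : b * b = -1) (ht : t * t = 3) :
  2 * evalP P10 b t x y * evalP Q9 b t x y * evalP P8 b t x y = evalP Q10 b t x y * (2 * b * evalP P8 b t x y * evalP Q9 b t x y + 2 * evalP P9 b t x y * evalP Q8 b t x y + (2 - b + t) * evalP Q8 b t x y * evalP Q9 b t x y).
Proof. rewrite /evalP /P10 /Q10 /P9 /Q9 /P8 /Q8 /=; ring: hb ht. Qed.

Lemma id11 (R : comNzRingType) (b t x y : R) (hb : b * b = -1) (ht : t * t = 3) :
  2 * evalP P11 b t x y * evalP Q10 b t x y * evalP P9 b t x y = evalP Q11 b t x y * (2 * b * evalP P9 b t x y * evalP Q10 b t x y + 2 * evalP P10 b t x y * evalP Q9 b t x y + (2 - b + t) * evalP Q9 b t x y * evalP Q10 b t x y).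
Proof. rewrite /evalP /P11 /Q11 /P10 /Q10 /P9 /Q9 /=; ring: hb ht. Qed.

Lemma id12 (R : comNzRingType) (b t x y : R) (hb : b * b = -1) (ht : t * t = 3) :
  2 * evalP P12 b t x y * evalP Q11 b t x y * evalP P10 b t x y = evalP Q12 b t x y * (2 * b * evalP P10 b t x y * evalP Q11 b t x y + 2 * evalP P11 b t x y * evalP Q10 b t x y + (2 - b + t) * evalP Q10 b t x y * evalP Q11 b t x y).
Proof. rewrite /evalP /P12 /Q12 /P11 /Q11 /P10 /Q10 /=; ring: hb ht. Qed.

Lemma id13 (R : comNzRingType) (b t x y : R) (hb : b * b = -1) (ht : t * t = 3) :
  2 * evalP P13 b t x y * evalP Q12 b t x y * evalP P11 b t x y = evalP Q13 b t x y * (2 * b * evalP P11 b t x y * evalP Q12 b t x y + 2 * evalP P12 b t x y * evalP Q11 b t x y + (2 - b + t) * evalP Q11 b t x y * evalP Q12 b t x y).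
Proof. rewrite /evalP /P13 /Q13 /P12 /Q12 /P11 /Q11 /=; ring: hb ht. Qed.

Lemma id14 (R : comNzRingType) (b t x y : R) (hb : b * b = -1) (ht : t * t = 3) :
  2 * evalP P14 b t x y * evalP Q13 b t x y * evalP P12 b t x y = evalP Q14 b t x y * (2 * b * evalP P12 b t x y * evalP Q13 b t x y + 2 * evalP P13 b t x y * evalP Q12 b t x y + (2 - b + t) * evalP Q12 b t x y * evalP Q13 b t x y).
Proof. rewrite /evalP /P14 /Q14 /P13 /Q13 /P12 /Q12 /=; ring: hb ht. Qed.

Lemma step_gen (F : fieldType) (A B T p2 q2 p1 q1 p q : F) :
  (2 : F) != 0 -> 2 * A = 2 - B + T -> p2 != 0 -> q2 != 0 -> q1 != 0 -> q != 0 ->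
  2 * p * q1 * p2 = q * (2 * B * p2 * q1 + 2 * p1 * q2 + (2 - B + T) * q2 * q1) ->
  (B * (p2 / q2) + p1 / q1 + A) / (p2 / q2) = p / q.
Proof.
move=> h2 hA hp2 hq2 hq1 hq E.
have -> : A = (2 - B + T) / 2 by rewrite -hA; field.
have -> : p = q * (2 * B * p2 * q1 + 2 * p1 * q2 + (2 - B + T) * q2 * q1) / (2 * q1 * p2).
  rewrite -E (_ : 2 * p * q1 * p2 = p * (2 * q1 * p2)); last by ring.
  by rewrite mulfK // !mulf_neq0.
by field; rewrite hq hp2 hq1 h2 hq2.
Qed.

Definition cstF := (@FracField.tofrac {poly {poly C}}) \o (@polyC {poly C}) \o (@polyC C).
Lemma cstE (c : C) : cst c = cstF c. Proof. by []. Qed.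

Lemma two_nz : (2 : Cz1z2) != 0.
Proof. by rewrite -(rmorph_nat cstF 2) fmorph_eq0 pnatr_eq0. Qed.

Lemma cstB (b : C) : b * b = -1 -> cst b * cst b = -1.
Proof. by move=> hb; rewrite !cstE -rmorphM hb rmorphN1. Qed.

Lemma cstT (t : C) : t * t = 3 -> cst t * cst t = 3.
Proof. by move=> ht; rewrite !cstE -rmorphM ht rmorph_nat. Qed.

Lemma cstA (b t a0 : C) : 2 * a0 = 2 - b + t -> 2 * cst a0 = 2 - cst b + cst t.
Proof. by move=> ha; rewrite !cstE -(rmorph_nat cstF 2) -rmorphM ha rmorphD rmorphB. Qed.

Definition Zf (b t : C) (n : nat) : Cz1z2 :=
  match n with
  | 1 => evalP P1 (cst b) (cst t) z1 z2 / evalP Q1 (cst b) (cst t) z1 z2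
  | 2 => evalP P2 (cst b) (cst t) z1 z2 / evalP Q2 (cst b) (cst t) z1 z2
  | 3 => evalP P3 (cst b) (cst t) z1 z2 / evalP Q3 (cst b) (cst t) z1 z2
  | 4 => evalP P4 (cst b) (cst t) z1 z2 / evalP Q4 (cst b) (cst t) z1 z2
  | 5 => evalP P5 (cst b) (cst t) z1 z2 / evalP Q5 (cst b) (cst t) z1 z2
  | 6 => evalP P6 (cst b) (cst t) z1 z2 / evalP Q6 (cst b) (cst t) z1 z2
  | 7 => evalP P7 (cst b) (cst t) z1 z2 / evalP Q7 (cst b) (cst t) z1 z2
  | 8 => evalP P8 (cst b) (cst t) z1 z2 / evalP Q8 (cst b) (cst t) z1 z2
  | 9 => evalP P9 (cst b) (cst t) z1 z2 / evalP Q9 (cst b) (cst t) z1 z2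
  | 10 => evalP P10 (cst b) (cst t) z1 z2 / evalP Q10 (cst b) (cst t) z1 z2
  | 11 => evalP P11 (cst b) (cst t) z1 z2 / evalP Q11 (cst b) (cst t) z1 z2
  | 12 => evalP P12 (cst b) (cst t) z1 z2 / evalP Q12 (cst b) (cst t) z1 z2
  | 13 => evalP P13 (cst b) (cst t) z1 z2 / evalP Q13 (cst b) (cst t) z1 z2
  | 14 => evalP P14 (cst b) (cst t) z1 z2 / evalP Q14 (cst b) (cst t) z1 z2
  | _ => 0
  end.

Lemma stepZ3 (b t a0 : C) (hb : b * b = -1) (ht : t * t = 3) (ha : 2 * a0 = 2 - b + t) :
  (cst b * Zf b t 1 + Zf b t 2 + cst a0) / Zf b t 1 = Zf b t 3.
Proof.
rewrite /Zf; apply: (step_gen two_nz (cstA ha) (P1_nzF hb ht) (Q1_nzF hb ht) (Q2_nzF hb ht) (Q3_nzF hb ht)).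
by apply: id3; [exact: cstB | exact: cstT].
Qed.

Lemma stepZ4 (b t a0 : C) (hb : b * b = -1) (ht : t * t = 3) (ha : 2 * a0 = 2 - b + t) :
  (cst b * Zf b t 2 + Zf b t 3 + cst a0) / Zf b t 2 = Zf b t 4.
Proof.
rewrite /Zf; apply: (step_gen two_nz (cstA ha) (P2_nzF hb ht) (Q2_nzF hb ht) (Q3_nzF hb ht) (Q4_nzF hb ht)).
by apply: id4; [exact: cstB | exact: cstT].
Qed.

Lemma stepZ5 (b t a0 : C) (hb : b * b = -1) (ht : t * t = 3) (ha : 2 * a0 = 2 - b + t) :
  (cst b * Zf b t 3 + Zf b t 4 + cst a0) / Zf b t 3 = Zf b t 5.
Proof.
rewrite /Zf; apply: (step_gen two_nz (cstA ha) (P3_nzF hb ht) (Q3_nzF hb ht) (Q4_nzF hb ht) (Q5_nzF hb ht)).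
by apply: id5; [exact: cstB | exact: cstT].
Qed.

Lemma stepZ6 (b t a0 : C) (hb : b * b = -1) (ht : t * t = 3) (ha : 2 * a0 = 2 - b + t) :
  (cst b * Zf b t 4 + Zf b t 5 + cst a0) / Zf b t 4 = Zf b t 6.
Proof.
rewrite /Zf; apply: (step_gen two_nz (cstA ha) (P4_nzF hb ht) (Q4_nzF hb ht) (Q5_nzF hb ht) (Q6_nzF hb ht)).
by apply: id6; [exact: cstB | exact: cstT].
Qed.

Lemma stepZ7 (b t a0 : C) (hb : b * b = -1) (ht : t * t = 3) (ha : 2 * a0 = 2 - b + t) :
  (cst b * Zf b t 5 + Zf b t 6 + cst a0) / Zf b t 5 = Zf b t 7.
Proof.
rewrite /Zf; apply: (step_gen two_nz (cstA ha) (P5_nzF hb ht) (Q5_nzF hb ht) (Q6_nzF hb ht) (Q7_nzF hb ht)).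
by apply: id7; [exact: cstB | exact: cstT].
Qed.

Lemma stepZ8 (b t a0 : C) (hb : b * b = -1) (ht : t * t = 3) (ha : 2 * a0 = 2 - b + t) :
  (cst b * Zf b t 6 + Zf b t 7 + cst a0) / Zf b t 6 = Zf b t 8.
Proof.
rewrite /Zf; apply: (step_gen two_nz (cstA ha) (P6_nzF hb ht) (Q6_nzF hb ht) (Q7_nzF hb ht) (Q8_nzF hb ht)).
by apply: id8; [exact: cstB | exact: cstT].
Qed.

Lemma stepZ9 (b t a0 : C) (hb : b * b = -1) (ht : t * t = 3) (ha : 2 * a0 = 2 - b + t) :
  (cst b * Zf b t 7 + Zf b t 8 + cst a0) / Zf b t 7 = Zf b t 9.
Proof.
rewrite /Zf; apply: (step_gen two_nz (cstA ha) (P7_nzF hb ht) (Q7_nzF hb ht) (Q8_nzF hb ht) (Q9_nzF hb ht)).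
by apply: id9; [exact: cstB | exact: cstT].
Qed.

Lemma stepZ10 (b t a0 : C) (hb : b * b = -1) (ht : t * t = 3) (ha : 2 * a0 = 2 - b + t) :
  (cst b * Zf b t 8 + Zf b t 9 + cst a0) / Zf b t 8 = Zf b t 10.
Proof.
rewrite /Zf; apply: (step_gen two_nz (cstA ha) (P8_nzF hb ht) (Q8_nzF hb ht) (Q9_nzF hb ht) (Q10_nzF hb ht)).
by apply: id10; [exact: cstB | exact: cstT].
Qed.

Lemma stepZ11 (b t a0 : C) (hb : b * b = -1) (ht : t * t = 3) (ha : 2 * a0 = 2 - b + t) :
  (cst b * Zf b t 9 + Zf b t 10 + cst a0) / Zf b t 9 = Zf b t 11.
Proof.
rewrite /Zf; apply: (step_gen two_nz (cstA ha) (P9_nzF hb ht) (Q9_nzF hb ht) (Q10_nzF hb ht) (Q11_nzF hb ht)).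
by apply: id11; [exact: cstB | exact: cstT].
Qed.

Lemma stepZ12 (b t a0 : C) (hb : b * b = -1) (ht : t * t = 3) (ha : 2 * a0 = 2 - b + t) :
  (cst b * Zf b t 10 + Zf b t 11 + cst a0) / Zf b t 10 = Zf b t 12.
Proof.
rewrite /Zf; apply: (step_gen two_nz (cstA ha) (P10_nzF hb ht) (Q10_nzF hb ht) (Q11_nzF hb ht) (Q12_nzF hb ht)).
by apply: id12; [exact: cstB | exact: cstT].
Qed.

Lemma stepZ13 (b t a0 : C) (hb : b * b = -1) (ht : t * t = 3) (ha : 2 * a0 = 2 - b + t) :
  (cst b * Zf b t 11 + Zf b t 12 + cst a0) / Zf b t 11 = Zf b t 13.
Proof.
rewrite /Zf; apply: (step_gen two_nz (cstA ha) (P11_nzF hb ht) (Q11_nzF hb ht) (Q12_nzF hb ht) (Q13_nzF hb ht)).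
by apply: id13; [exact: cstB | exact: cstT].
Qed.

Lemma stepZ14 (b t a0 : C) (hb : b * b = -1) (ht : t * t = 3) (ha : 2 * a0 = 2 - b + t) :
  (cst b * Zf b t 12 + Zf b t 13 + cst a0) / Zf b t 12 = Zf b t 14.
Proof.
rewrite /Zf; apply: (step_gen two_nz (cstA ha) (P12_nzF hb ht) (Q12_nzF hb ht) (Q13_nzF hb ht) (Q14_nzF hb ht)).
by apply: id14; [exact: cstB | exact: cstT].
Qed.

Lemma stepZ (b t a0 : C) (hb : b * b = -1) (ht : t * t = 3) (ha : 2 * a0 = 2 - b + t) n :
  (n <= 11)%N -> (cst b * Zf b t n.+1 + Zf b t n.+2 + cst a0) / Zf b t n.+1 = Zf b t n.+3.
Proof.
case: n => [_|n]; first exact: stepZ3.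
case: n => [_|n]; first exact: stepZ4.
case: n => [_|n]; first exact: stepZ5.
case: n => [_|n]; first exact: stepZ6.
case: n => [_|n]; first exact: stepZ7.
case: n => [_|n]; first exact: stepZ8.
case: n => [_|n]; first exact: stepZ9.
case: n => [_|n]; first exact: stepZ10.
case: n => [_|n]; first exact: stepZ11.
case: n => [_|n]; first exact: stepZ12.
case: n => [_|n]; first exact: stepZ13.
case: n => [_|n]; first exact: stepZ14.
by [].
Qed.

Lemma Zf_nz (b t : C) (hb : b * b = -1) (ht : t * t = 3) n :
  (1 <= n <= 14)%N -> Zf b t n != 0.
Proof.
case: n => [//|n].
case: n => [_|n]; first exact: (mulf_neq0 (P1_nzF hb ht) (invr_neq0 (Q1_nzF hb ht))).
case: n => [_|n]; first exact: (mulf_neq0 (P2_nzF hb ht) (invr_neq0 (Q2_nzF hb ht))).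
case: n => [_|n]; first exact: (mulf_neq0 (P3_nzF hb ht) (invr_neq0 (Q3_nzF hb ht))).
case: n => [_|n]; first exact: (mulf_neq0 (P4_nzF hb ht) (invr_neq0 (Q4_nzF hb ht))).
case: n => [_|n]; first exact: (mulf_neq0 (P5_nzF hb ht) (invr_neq0 (Q5_nzF hb ht))).
case: n => [_|n]; first exact: (mulf_neq0 (P6_nzF hb ht) (invr_neq0 (Q6_nzF hb ht))).
case: n => [_|n]; first exact: (mulf_neq0 (P7_nzF hb ht) (invr_neq0 (Q7_nzF hb ht))).
case: n => [_|n]; first exact: (mulf_neq0 (P8_nzF hb ht) (invr_neq0 (Q8_nzF hb ht))).
case: n => [_|n]; first exact: (mulf_neq0 (P9_nzF hb ht) (invr_neq0 (Q9_nzF hb ht))).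
case: n => [_|n]; first exact: (mulf_neq0 (P10_nzF hb ht) (invr_neq0 (Q10_nzF hb ht))).
case: n => [_|n]; first exact: (mulf_neq0 (P11_nzF hb ht) (invr_neq0 (Q11_nzF hb ht))).
case: n => [_|n]; first exact: (mulf_neq0 (P12_nzF hb ht) (invr_neq0 (Q12_nzF hb ht))).
case: n => [_|n]; first exact: (mulf_neq0 (P13_nzF hb ht) (invr_neq0 (Q13_nzF hb ht))).
case: n => [_|n]; first exact: (mulf_neq0 (P14_nzF hb ht) (invr_neq0 (Q14_nzF hb ht))).
by [].
Qed.

Lemma ends_gen (F : fieldType) (b t x y : F) :
  [/\ evalP P1 b t x y / evalP Q1 b t x y = x, evalP P2 b t x y / evalP Q2 b t x y = y,
      evalP P13 b t x y / evalP Q13 b t x y = x & evalP P14 b t x y / evalP Q14 b t x y = y].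
Proof.
rewrite /evalP /P1 /Q1 /P2 /Q2 /P13 /Q13 /P14 /Q14 /=.
split; field. all: rewrite ?oner_neq0 //.
Qed.

Lemma Zf_ends (b t : C) :
  [/\ Zf b t 1 = z1, Zf b t 2 = z2, Zf b t 13 = z1 & Zf b t 14 = z2].
Proof. exact: ends_gen. Qed.


Lemma pair_Z (b t a0 : C) (hb : b * b = -1) (ht : t * t = 3) (ha : 2 * a0 = 2 - b + t) n :
  (n <= 12)%N -> zseq_pair a0 b n = (Zf b t n.+1, Zf b t n.+2).
Proof.
elim: n => [_|n IH hn].
  by have [-> -> _ _] := Zf_ends b t.
rewrite /= IH ?(ltnW hn) //; congr pair; exact: stepZ.
Qed.

Lemma per12 (a0 a2 : C) : zseq_pair a0 a2 12 = zseq_pair a0 a2 0 ->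
  forall m, zseq_pair a0 a2 (m + 12) = zseq_pair a0 a2 m.
Proof. by move=> h; elim=> // m IH; rewrite addSn /= IH. Qed.

Lemma permod (a0 a2 : C) : zseq_pair a0 a2 12 = zseq_pair a0 a2 0 ->
  forall m, zseq_pair a0 a2 m = zseq_pair a0 a2 (m %% 12)%N.
Proof.
move=> h m; rewrite {1}(div.divn_eq m 12); elim: (m %/ 12)%N => [|q IH].
  by rewrite mul0n add0n.
by rewrite mulSnr addnAC per12.
Qed.

Lemma main_gen (b t a0 : C) (hb : b * b = -1) (ht : t * t = 3) (ha : 2 * a0 = 2 - b + t) :
  periodic_with a0 b 12 /\
  (forall n, (1 <= n)%N -> zseq a0 b (n + 12) = zseq a0 b n).
Proof.
have h12 : zseq_pair a0 b 12 = zseq_pair a0 b 0.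
  by rewrite (pair_Z hb ht ha) //; have [_ _ -> ->] := Zf_ends b t.
split; [split; [|split]|].
- case=> [//|m] _.
  have hm : (m %% 12 < 12)%N by rewrite ltn_pmod.
  rewrite /zseq (permod h12) (pair_Z hb ht ha); last by apply: ltnW.
  apply: (Zf_nz hb ht); rewrite ltnS /=; exact: (leq_trans (ltnW hm)).
- by change (fst (zseq_pair a0 b 12) = fst (zseq_pair a0 b 0)); rewrite h12.
- by change (fst (zseq_pair a0 b (1 + 12)) = fst (zseq_pair a0 b 1)); rewrite per12.
- case=> [//|m] _.
  by change (fst (zseq_pair a0 b (m + 12)) = fst (zseq_pair a0 b m)); rewrite per12.
Qed.

Lemma sq3 : sqrt3 * sqrt3 = 3.
Proof. by rewrite /sqrt3 -rmorphM -expr2 sqr_sqrtr ?ler0n // rmorph_nat. Qed.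

Lemma sqi : iC * iC = -1.
Proof. by rewrite /iC -expr2 sqrCi. Qed.

Lemma alg1 (F : fieldType) (i s : F) : (2 : F) != 0 ->
  2 * (1 + i / 2 - s / 2) = 2 - (- i) + (- s).
Proof. by move=> h; field. Qed.
Lemma alg2 (F : fieldType) (i s : F) : (2 : F) != 0 ->
  2 * (1 + i / 2 + s / 2) = 2 - (- i) + s.
Proof. by move=> h; field. Qed.
Lemma alg3 (F : fieldType) (i s : F) : (2 : F) != 0 ->
  2 * (1 - i / 2 - s / 2) = 2 - i + (- s).
Proof. by move=> h; field. Qed.
Lemma alg4 (F : fieldType) (i s : F) : (2 : F) != 0 ->
  2 * (1 - i / 2 + s / 2) = 2 - i + s.
Proof. by move=> h; field. Qed.

Unset Implicit Arguments.

Theorem mainTheorem2 (a0 a2 : C) :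
  (a0, a2) \in [:: (1 + iC / 2 - sqrt3 / 2, - iC);
                   (1 + iC / 2 + sqrt3 / 2, - iC);
                   (1 - iC / 2 - sqrt3 / 2, iC);
                   (1 - iC / 2 + sqrt3 / 2, iC)] ->
  periodic_with a0 a2 12 /\
  (forall n, (1 <= n)%N -> zseq a0 a2 (n + 12) = zseq a0 a2 n).
Proof.
have h2 : (2 : C) != 0 by rewrite pnatr_eq0.
have hi : - iC * - iC = -1 by rewrite mulrNN sqi.
have hs : - sqrt3 * - sqrt3 = 3 by rewrite mulrNN sq3.
rewrite !inE => /or4P [] /eqP [-> ->].
- exact: (main_gen hi hs (alg1 _ _ h2)).
- exact: (main_gen hi sq3 (alg2 _ _ h2)).
- exact: (main_gen sqi hs (alg3 _ _ h2)).
- exact: (main_gen sqi sq3 (alg4 _ _ h2)).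
Qed.
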